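(* Let $q\in\mathbb N$, $N>q$, $\theta\in[0,1]$ and $\alpha>1$. Let $\mathbb X=\{x\subseteq\mathbb N: x \text{ finite}, |x|>q\}$ and $\mathbb Y$ the set of size-$q$ subsets of elements of $\mathbb X$. There exist datasets $x\simeq_\Delta x'$ of size $N$ and a function $h:\mathbb Y\to\{0,1\}$ such that the subsampled randomized response mechanism $M=B\circ S$ ($S$ subsampling without replacement with batch size $q$, $B(y)=|h(y)-(1-V)|$, $V\sim\mathrm{Bern}(\theta)$) satisfies $$\Lambda_\alpha(m_x\|m_{x'})=\max_{\tau\in\{\theta,1-\theta\}}\Lambda_\alpha\big((1-w)\mathrm{Bern}(\cdot\mid\theta)+w\,\mathrm{Bern}(\cdot\mid\tau)\ \big\|\ (1-w)\mathrm{Bern}(\cdot\mid\theta)+w\,\mathrm{Bern}(\cdot\mid1-\tau)\big),\quad w=q/N.$$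
   Context: Subsampling without replacement: $s_x(y)=\binom{|x|}{q}^{-1}$ for $y\subseteq x$, $|y|=q$. $b_y$ is the pmf of $B(y)$ on $\{0,1\}$ and $m_x=\sum_y b_y s_x(y)$. $\mathrm{Bern}(\cdot\mid p)$ is the pmf on $\{0,1\}$ with mass $p$ at $1$. $x\simeq_\Delta x'$ iff $x'=(x\setminus\{a\})\cup\{a'\}$ with $a\in x$, $a'\notin x$. $\Lambda_\alpha(p\|q)=\sum_{z\in\{0,1\}}p(z)^\alpha q(z)^{1-\alpha}$. *)

(* Defs.v *)
From HB Require Import structures.
From mathcomp Require Import all_boot all_order all_algebra.
From mathcomp Require Import finmap.
From mathcomp Require Import boolp reals ereal exp.
Set Implicit Arguments. Unset Strict Implicit. Unset Printing Implicit Defensive.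
Import Order.TTheory GRing.Theory Num.Theory.
Local Open Scope ring_scope.
Local Open Scope fset_scope.

Section Defs.
Variable R : realType.

Definition bern (p : R) (z : bool) : R := if z then p else 1 - p.

Definition rr_pmf (theta : R) (h : {fset nat} -> bool) (y : {fset nat})
  (z : bool) : R :=
  \sum_(v : bool) bern theta v *
     ((`|(h y)%:R - (1 - (v%:R : R))| == (z%:R : R))%:R).

Definition subsample (q : nat) (x y : {fset nat}) : R :=
  (('C(#|` x|, q))%:R)^-1.

Definition mech_pmf (theta : R) (h : {fset nat} -> bool) (q : nat)
  (x : {fset nat}) (z : bool) : R :=
  \sum_(y <- fpowerset x | #|` y| == q) rr_pmf theta h y z * subsample q x y.

Definition neighbour (x x' : {fset nat}) : Prop :=
  exists a a' : nat, [/\ a \in x, a' \notin x & x' = (x `\ a) `|` [fset a']].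

(* one term p^alpha q^(1-alpha) in \bar R, with the usual conventions
   0 * (anything) = 0 when p = 0, and p^alpha * 0^(1-alpha) = +oo when p > 0
   and q = 0 (alpha > 1). *)
Definition renyi_term (alpha : R) (p q : R) : \bar R :=
  if p == 0 then 0%E
  else if q == 0 then +oo%E
  else (p `^ alpha * q `^ (1 - alpha))%:E.

Definition Lambda (alpha : R) (p q : bool -> R) : \bar R :=
  (renyi_term alpha (p false) (q false) + renyi_term alpha (p true) (q true))%E.

Definition mix (w theta tau : R) (z : bool) : R :=
  (1 - w) * bern theta z + w * bern tau z.

End Defs.

(* Main.v *)
Require Import Defs.
From HB Require Import structures.
From mathcomp Require Import all_boot all_order all_algebra.
From mathcomp Require Import finmap.
From mathcomp Require Import boolp reals ereal exp.
From mathcomp Require Import ring lra.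
Import Order.TTheory GRing.Theory Num.Theory.
Local Open Scope ring_scope.
Local Open Scope fset_scope.
Lemma sum_fpow (R : realType) (A : {fset nat}) (F : {fset nat} -> R) :
  \sum_(y <- fpowerset A) F y = \sum_(Y : {set A}) F [fsetval y in Y].
Proof.
rewrite /fpowerset big_imfset /=; last first.
  by move=> X Y _ _ /fsetP eqXY; apply/setP => x; have := eqXY (val x); rewrite !inE.
rewrite big_enum /=; apply: eq_bigl => Y; by rewrite powersetT inE.
Qed.
Lemma card_fsetval (A : {fset nat}) (Y : {set A}) : #|` [fsetval y in Y]| = #|Y|.
Proof. rewrite card_imfset /=; last exact: val_inj. by rewrite cardE. Qed.
Lemma mem_fsetval (A : {fset nat}) (Y : {set A}) c (cA : c \in A) : (c \in [fsetval y in Y]) = ([` cA] \in Y).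
Proof. apply/imfsetP/idP => [[y /= yY E]|]. by rewrite (_ : [` cA] = y) //; apply: val_inj.
move=> H; by exists [` cA]. Qed.
Lemma nmem_fsetval (A : {fset nat}) (Y : {set A}) c : c \notin A -> (c \in [fsetval y in Y]) = false.
Proof. move=> cA; apply/imfsetP => [[y /= _ E]]. by move: cA; rewrite E fsvalP. Qed.

Lemma cardA (A : {fset nat}) : #|{: A}| = #|` A|.
Proof. by rewrite cardfE. Qed.
Lemma cnt_all (R : realType) (A : {fset nat}) q :
  \sum_(Y : {set A} | #|Y| == q) (1:R) = ('C(#|` A|, q))%:R.
Proof.
rewrite -cardA -card_draws -sum1_card natr_sum; apply: eq_bigl => Y; by rewrite inE.
Qed.
Lemma cnt_notin (R : realType) (A : {fset nat}) q (c0 : A) :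
  \sum_(Y : {set A} | #|Y| == q) ((c0 \notin Y)%:R : R) = ('C((#|` A|).-1, q))%:R.
Proof.
rewrite -cardA -(cardsC1 c0) -cards_draws -sum1_card natr_sum.
rewrite [RHS]big_mkcond [LHS]big_mkcond; apply: eq_bigr => Y _.
rewrite inE [X in X && _](_ : _ = (c0 \notin Y)).
  by case: (#|Y| == q); case: (c0 \in Y).
  apply/subsetP/idP => [H|H y yY]; first by apply/negP => /H; rewrite !inE eqxx.
  by rewrite !inE; apply: contraNneq H => <-.
Qed.

Lemma rrE (R : realType) (theta : R) h y z :
  rr_pmf theta h y z = if h y then bern theta z else bern (1 - theta) z.
Proof.
rewrite /rr_pmf big_bool /= /bern.
case: (h y); case: z => /=; rewrite ?mulr1n ?mulr0n ?subr0 ?subrr ?subr0 ?sub0r ?subrr ?normrN ?normr1 ?normr0 ?eqxx;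
  rewrite ?(eq_sym 0) ?oner_eq0 ?oner_neq0 /=; rewrite ?mulr1 ?mulr0 ?addr0 ?add0r //; ring.
Qed.

Lemma mech_notin (R : realType) (th : R) q (x : {fset nat}) c z :
  (q <= #|` x|)%N -> c \notin x ->
  mech_pmf th (fun y => c \notin y) q x z = bern th z.
Proof.
move=> qx cx; rewrite /mech_pmf /subsample big_mkcond /= sum_fpow.
under eq_bigr => Y _ do rewrite card_fsetval rrE /= nmem_fsetval //.
rewrite -big_mkcond /=.
set Ci := (_ ^-1).
have -> : \sum_(Y : {set x} | #|Y| == q) (bern th z * Ci) = (\sum_(Y : {set x} | #|Y| == q) 1) * (bern th z * Ci).
  rewrite big_distrl; apply eq_bigr => *; exact: (esym (mul1r _)).
rewrite (cnt_all R) /Ci mulrCA mulfV ?mulr1 // pnatr_eq0 -lt0n bin_gt0 //.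
Qed.
Lemma mech_in (R : realType) (th : R) q (x : {fset nat}) c z :
  (q < #|` x|)%N -> c \in x ->
  mech_pmf th (fun y => c \notin y) q x z = mix (q%:R / (#|` x|)%:R) th (1 - th) z.
Proof.
move=> qx cx; rewrite /mech_pmf /subsample big_mkcond /= sum_fpow.
under eq_bigr => Y _ do rewrite card_fsetval rrE /= (@mem_fsetval x Y c cx).
rewrite -big_mkcond /=.
set Ci := (_ ^-1); set c0 := [` cx]; set b0 := bern th z; set b1 := bern (1 - th) z.
have -> : \sum_(Y : {set x} | #|Y| == q) ((if c0 \notin Y then b0 else b1) * Ci) =
   ((\sum_(Y : {set x} | #|Y| == q) 1) * b1 + (\sum_(Y : {set x} | #|Y| == q) (c0 \notin Y)%:R) * (b0 - b1)) * Ci.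
  rewrite !big_distrl /= -big_split /= big_distrl /=; apply eq_bigr => Y _.
  by case: (c0 \in Y) => /=; ring.
rewrite cnt_all cnt_notin /Ci /mix -/b0 -/b1.
have := mul_bin_down #|` x| q.
move: qx; set n := #|` x| => qx.
have n0 : (0 < n)%N by apply: leq_ltn_trans qx.
have C0 : (0 < 'C(n, q))%N by rewrite bin_gt0 ltnW.
move=> /(congr1 (fun k => k%:R : R)); rewrite !natrM natrB ?(ltnW qx) // => E.
have nR : (n%:R : R) != 0 by rewrite pnatr_eq0 -lt0n.
have CR : ('C(n, q)%:R : R) != 0 by rewrite pnatr_eq0 -lt0n.
have -> : ('C(n.-1, q)%:R : R) = (n%:R - q%:R) * 'C(n, q)%:R / n%:R.
  by rewrite -E mulrC mulrA mulVf ?mul1r.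
clearbody b0 b1 Ci n. by field; rewrite nR CR.
Qed.
From mathcomp Require Import zify.
Theorem mainTheorem14 (R : realType) (q N : nat) (theta alpha : R) :
  (q < N)%N -> 0 <= theta <= 1 -> 1 < alpha ->
  exists (x x' : {fset nat}) (h : {fset nat} -> bool),
    [/\ #|` x| = N, #|` x'| = N, neighbour x x' &
      let w := (q%:R / N%:R : R) in
      Lambda alpha (mech_pmf theta h q x) (mech_pmf theta h q x') =
      Order.max
        (Lambda alpha (mix w theta theta) (mix w theta (1 - theta)))
        (Lambda alpha (mix w theta (1 - theta)) (mix w theta (1 - (1 - theta))))].
Proof.
move=> qN _ _.
pose x := [fset i in iota 0 N].
pose x' := (x `\ 0) `|` [fset N].
have memx i : (i \in x) = (i < N)%N by rewrite !inE mem_iota.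
have memx' i : (i \in x') = (0 < i <= N)%N.
  rewrite !inE mem_iota /=; case: ltngtP => //; lia.
have cx : #|` x| = N by rewrite card_fseq undup_id ?iota_uniq // size_iota.
have cx' : #|` x'| = N.
  have -> : x' = [fset i in iota 1 N].
    by apply/fsetP => i; rewrite memx' !inE mem_iota; lia.
  by rewrite card_fseq undup_id ?iota_uniq // size_iota.
have Nx : N \notin x by rewrite memx ltnn.
have Nx' : N \in x' by rewrite memx'; lia.
have x0 : 0 \in x by rewrite memx; lia.
have x'0 : 0 \notin x' by rewrite memx'.
have nb : neighbour x x' by exists 0%N, N.
set w := (q%:R / N%:R : R).
have mixE : mix w theta theta = bern theta.
  by apply/funext => z; rewrite /mix; ring.
have mixE' : mix w theta (1 - (1 - theta)) = bern theta.
  by rewrite (_ : 1 - (1 - theta) = theta) //; ring.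
case: (leP (Lambda alpha (bern theta) (mix w theta (1 - theta)))
           (Lambda alpha (mix w theta (1 - theta)) (bern theta))) => H.
- exists x, x', (fun y => 0%N \notin y); split => //; cbv zeta; rewrite -/w mixE mixE'.
  have -> : mech_pmf theta (fun y => 0%N \notin y) q x = mix w theta (1 - theta).
    by apply/funext => z; rewrite mech_in // cx.
  have -> : mech_pmf theta (fun y => 0%N \notin y) q x' = bern theta.
    by apply/funext => z; rewrite mech_notin // cx'; lia.
  by rewrite max_r.
- exists x, x', (fun y => N \notin y); split => //; cbv zeta; rewrite -/w mixE mixE'.
  have -> : mech_pmf theta (fun y => N \notin y) q x = bern theta.
    by apply/funext => z; rewrite mech_notin // cx; lia.
  have -> : mech_pmf theta (fun y => N \notin y) q x' = mix w theta (1 - theta).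
    by apply/funext => z; rewrite mech_in // cx'.
  by rewrite max_l // ltW.
Qed.
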